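(* Let $\tilde{\mathcal E}\ge0$ be a hermitian operator on $\mathbb C^\Lambda$ whose off-diagonal matrix elements are negative. For $h$ real, let $\mathcal Q_4(h)$ be the block matrix indexed by $j,j'\in\{0,\dots,n_\tau\}$ with $$\mathcal Q_4(h)_{j,j'}=\delta_{j,j'}\big(\mathbf 1+\epsilon\tilde{\mathcal E}-i\sqrt\epsilon\,h_j\big)-\delta_{j+1,j'}\mathbf 1 .$$ Then $\mathcal C_4(h)=\mathcal Q_4(h)^{-1}$ satisfies, for all real $h$ and all $j,j',x,x'$, $$\big|\mathcal C_4(h)_{(j,x),(j',x')}\big|\le\mathcal C_4(0)_{(j,x),(j',x')},$$ and the right hand side is bounded uniformly in $n_\tau$ (and in $j,j',x,x'$).
   Context: $\Lambda$ is a finite discrete torus $\mathbb Z^d/L\mathbb Z^d$ (spacing $1$); operators on $\mathbb C^\Lambda$ are identified with their matrices and functions on $\Lambda$ (in particular $h_j\in\mathbb R^\Lambda$) act as multiplication operators. $\beta>0$ is fixed, $n_\tau\in\mathbb N$, $\epsilon=\beta/n_\tau$, $h=(h_j)_{j=1}^{n_\tau}$ with $h_j\in\mathbb R^\Lambda$ and the convention $h_0=0$. Matrix elements $\mathcal C_4(h)_{(j,x),(j',x')}$ refer to the standard basis of $(\mathbb C^\Lambda)^{n_\tau+1}$. *)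

(* Defs.v *)
From HB Require Import structures.
From mathcomp Require Import all_boot all_order all_algebra.
From mathcomp Require Import reals.
From mathcomp Require Export complex.
Unset Printing Implicit Defensive.
Import Order.TTheory GRing.Theory Num.Theory.
Local Open Scope ring_scope.
Local Open Scope complex_scope.

(* The discrete torus Lambda = Z^d / L Z^d, realised as functions 'I_d -> 'I_L
   (coordinates mod L).  Only its finiteness is used. *)
Definition torus (d L : nat) : finType := {ffun 'I_d -> 'I_L}.

Section Defs.
Variable R : realType.
Variables (d L : nat).
Local Notation Lam := (torus d L).
Local Notation C := (R[i]).

Definition herm_op (E : Lam -> Lam -> C) : Prop :=
  forall x y, E x y = (E y x)^*.

Definition psd (E : Lam -> Lam -> C) : Prop :=
  forall v : Lam -> C, 0 <= \sum_x \sum_y (v x)^* * E x y * v y.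

(* off-diagonal matrix elements are negative (<= 0, real) *)
Definition offdiag_nonpos (E : Lam -> Lam -> C) : Prop :=
  forall x y, x != y -> E x y <= 0.

Definition blk_idx (ntau : nat) : finType := prod 'I_ntau.+1 Lam.

Definition eps (beta : R) (ntau : nat) : R := beta / ntau%:R.

Definition hh (h : nat -> Lam -> R) (j : nat) (x : Lam) : R :=
  if j == 0%N then 0 else h j x.

Definition Q4_entry (beta : R) (ntau : nat) (E : Lam -> Lam -> C)
  (h : nat -> Lam -> R) (a b : blk_idx ntau) : C :=
  let: (j, x) := a in let: (j', x') := b in
  let e := eps beta ntau in
  if (j : nat) == j' then
    (x == x')%:R + (e%:C) * E x x'
      - 'i * (Num.sqrt e)%:C * (hh h j x)%:C * (x == x')%:R
  else if (j.+1 == j')%N then - (x == x')%:R else 0.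

Definition Q4 (beta : R) (ntau : nat) (E : Lam -> Lam -> C) (h : nat -> Lam -> R) : 'M[C]_#|blk_idx ntau| :=
  \matrix_(a, b) Q4_entry beta ntau E h (enum_val a) (enum_val b).

Definition C4 (beta : R) (ntau : nat) (E : Lam -> Lam -> C) (h : nat -> Lam -> R) : 'M[C]_#|blk_idx ntau| := invmx (Q4 beta ntau E h).

Definition C4_entry (beta : R) (ntau : nat) (E : Lam -> Lam -> C) (h : nat -> Lam -> R) (j : 'I_ntau.+1) (x : Lam)
  (j' : 'I_ntau.+1) (x' : Lam) : C :=
  C4 beta ntau E h (enum_rank ((j, x) : blk_idx ntau))
                   (enum_rank ((j', x') : blk_idx ntau)).

End Defs.

Arguments herm_op {R d L} E.
Arguments psd {R d L} E.
Arguments offdiag_nonpos {R d L} E.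
Arguments blk_idx {d L} ntau.
Arguments hh {R d L} h j x.
Arguments Q4_entry {R d L} beta ntau E h a b.
Arguments Q4 {R d L} beta ntau E h.
Arguments C4 {R d L} beta ntau E h.
Arguments C4_entry {R d L} beta ntau E h j x j' x'.

(* Main.v *)
Require Import Defs.
From mathcomp Require Import all_boot all_order all_algebra reals complex.
From mathcomp Require Import ring lra zify.
Import Order.TTheory GRing.Theory Num.Theory.
Local Open Scope ring_scope.
Local Open Scope complex_scope.

Section Lam.
Variables (R : realType) (d L : nat).
Local Notation Lam := (torus d L).
Variable E : Lam -> Lam -> R[i].
Hypothesis hherm : herm_op E.
Hypothesis hpsd : psd E.
Hypothesis hoff : offdiag_nonpos E.
Variable e : R.
Hypothesis he : 0 <= e.

Definition Er x y := complex.Re (E x y).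

Lemma E_real x y : E x y = (Er x y)%:C.
Proof.
rewrite /Er; case: (eqVneq x y) => [<-|nxy].
  have := hherm x x; case: (E x x) => a b /= [] hb.
  by congr Complex; lra.
have := hoff x y nxy; rewrite lecE /=; case: (E x y) => a b /= /andP[/eqP hb _].
by rewrite -hb.
Qed.

Lemma Er_off x y : x != y -> Er x y <= 0.
Proof. by move=> nxy; have := hoff x y nxy; rewrite lecE => /andP[_]. Qed.

Lemma Er_psd (w : Lam -> R) : 0 <= \sum_x \sum_y w x * Er x y * w y.
Proof.
have := hpsd (fun x => (w x)%:C).
rewrite -ler0c; congr (_ <= _).
rewrite rmorph_sum; apply: eq_bigr => x _; rewrite rmorph_sum; apply: eq_bigr => y _.
rewrite E_real !rmorphM; congr (_ * _ * _); by apply/eqP; rewrite eq_complex /= oppr0 !eqxx.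

Qed.

Definition Mr x y := (x == y)%:R + e * Er x y.

Lemma quad_ge (w : Lam -> R) : \sum_x w x ^+ 2 <= \sum_x w x * \sum_y Mr x y * w y.
Proof.
have -> : \sum_x w x * \sum_y Mr x y * w y =
   \sum_x w x ^+ 2 + e * \sum_x \sum_y w x * Er x y * w y.
  rewrite mulr_sumr -big_split /=; apply: eq_bigr => x _.
  rewrite mulr_sumr mulr_sumr.
  under eq_bigr do rewrite /Mr mulrDl mulrDr.
  rewrite big_split /=; congr (_ + _).
    rewrite (bigD1 x) //= eqxx big1 ?addr0; first by rewrite mul1r expr2.
    by move=> y; rewrite eq_sym => /negbTE ->; rewrite mul0r mulr0.
  by apply: eq_bigr => y _; ring.
by rewrite lerDl mulr_ge0 // Er_psd.
Qed.

Lemma lam_ip (w : Lam -> R) : (forall x, 0 <= \sum_y Mr x y * w y) -> forall x, 0 <= w x.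
Proof.
move=> hw.
pose m x := if w x < 0 then - w x else 0.
pose p x := if w x < 0 then 0 else w x.
have wE y : w y = p y - m y by rewrite /p /m; case: ifP => _; lra.
have m0 y : 0 <= m y by rewrite /m; case: ifP => h //; lra.
have p0 y : 0 <= p y by rewrite /p; case: ifP => h //; rewrite leNgt h.
have h1 : 0 <= \sum_x m x * \sum_y Mr x y * w y.
  by apply: sumr_ge0 => x _; rewrite mulr_ge0.
have h2 : \sum_x m x * \sum_y Mr x y * w y =
   \sum_x \sum_y m x * Mr x y * p y - \sum_x m x * \sum_y Mr x y * m y.
  rewrite -sumrB; apply: eq_bigr => x _; rewrite !mulr_sumr -sumrB.
  by apply: eq_bigr => y _; rewrite wE; ring.
have h3 : \sum_x \sum_y m x * Mr x y * p y <= 0.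
  apply: sumr_le0 => x _; apply: sumr_le0 => y _.
  case: (eqVneq x y) => [<-|nxy].
    by rewrite /m /p; case: ifP => _; rewrite ?mul0r ?mulr0.
  rewrite /Mr (negbTE nxy) add0r -mulrA mulrC -mulrA.
  by rewrite mulr_le0_ge0 ?mulr_ge0 // mulr_ge0_le0 // Er_off.
have h4 := quad_ge m.
have h5 : \sum_x m x ^+ 2 <= 0 by lra.
have h6 : forall y, m y ^+ 2 = 0.
  move=> y; apply: (psumr_eq0P (P := predT) (F := fun y => m y ^+ 2)) => //.
    by move=> z _; rewrite sqr_ge0.
  by apply/eqP; rewrite eq_le h5 sumr_ge0 // => z _; rewrite sqr_ge0.
move=> x; have := h6 x; rewrite /m; case: ifP => h; last by rewrite leNgt h.
move/eqP; rewrite sqrf_eq0 oppr_eq0 => /eqP hx; lra.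
Qed.


Lemma sq_le_sum (w : Lam -> R) x : w x ^+ 2 <= \sum_y w y ^+ 2.
Proof.
rewrite (bigD1 x) //= lerDl; apply: sumr_ge0 => y _; exact: sqr_ge0.
Qed.

Variable n : nat.
Local Notation I := (@blk_idx d L n).

Definition q0r (a b : I) : R :=
  let: (j, x) := a in let: (j', x') := b in
  ((j : nat) == j')%:R * Mr x x' - ((j : nat).+1 == j')%:R * (x == x')%:R.

Definition blk (v : I -> R) (k : nat) (x : Lam) : R :=
  if (k < n.+1)%N then v (inord k, x) else 0.

Lemma sum_ind (k : nat) (g : 'I_n.+1 -> R) :
  \sum_(j' : 'I_n.+1) (k == j')%:R * g j' = if (k < n.+1)%N then g (inord k) else 0.
Proof.
case: ifP => hk.
  rewrite (bigD1 (inord k)) //= inordK // eqxx mul1r big1 ?addr0 //.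
  move=> j hj; case: (eqVneq k j) => [hkj|]; last by rewrite mul0r.
  by exfalso; move/eqP: hj; apply; apply: val_inj; rewrite /= inordK // hkj.
rewrite big1 // => j _; case: (eqVneq k j) => [hkj|]; last by rewrite mul0r.
by move: (ltn_ord j); rewrite -hkj hk.
Qed.

Lemma blk_val (v : I -> R) (j : 'I_n.+1) x : blk v j x = v (j, x).
Proof. by rewrite /blk ltn_ord inord_val. Qed.

Lemma row_blk (v : I -> R) (j : 'I_n.+1) x :
  \sum_c q0r (j, x) c * v c = \sum_y Mr x y * v (j, y) - blk v j.+1 x.
Proof.
rewrite (eq_bigr (fun c => q0r (j,x) (c.1,c.2) * v (c.1,c.2))); last by case.
rewrite -(pair_bigA _ (fun j' y => q0r (j,x) (j',y) * v (j',y))) /=.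
have -> : \sum_(j' : 'I_n.+1) \sum_(y : Lam) q0r (j,x) (j',y) * v (j',y) =
   \sum_(j' : 'I_n.+1) ((j : nat) == j')%:R * \sum_y Mr x y * v (j', y)
   - \sum_(j' : 'I_n.+1) ((j : nat).+1 == j')%:R * v (j', x).
  rewrite -sumrB; apply: eq_bigr => j' _; rewrite /q0r mulr_sumr.
  rewrite (bigD1 x) //= [in RHS](bigD1 x) //= eqxx mulr1.
  rewrite [X in X = _](_ : _ = ((j == j')%:R * Mr x x - (j.+1 == j')%:R) * v (j', x) +
     \sum_(i | i != x) (j == j')%:R * (Mr x i * v (j', i))); first by ring.
  congr (_ + _); apply: eq_bigr => y; rewrite eq_sym => /negbTE ->.
  by rewrite mulr0 subr0 mulrA.
rewrite !sum_ind ltn_ord inord_val.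
by rewrite /blk.
Qed.

Lemma down_ind (P : nat -> Prop) : P n.+1 ->
  (forall j, (j < n.+1)%N -> P j.+1 -> P j) -> forall j, (j <= n.+1)%N -> P j.
Proof.
move=> P0 PS j hj.
have H : forall k, (k <= n.+1)%N -> P (n.+1 - k)%N.
  elim=> [|k IH] hk; first by rewrite subn0.
  have hk' : (k <= n.+1)%N by apply: ltnW.
  have := IH hk'; have -> : (n.+1 - k = (n.+1 - k.+1).+1)%N by rewrite subnS prednK // subn_gt0.
  apply: PS; rewrite subnS; move: hk; clear; lia.
have := H (n.+1 - j)%N (leq_subr _ _); by rewrite subKn.
Qed.

Lemma blk_ip (v : I -> R) : (forall a, 0 <= \sum_c q0r a c * v c) -> forall a, 0 <= v a.
Proof.
move=> hv.
have hb : forall j, (j < n.+1)%N -> forall x, 0 <= \sum_y Mr x y * blk v j y - blk v j.+1 x.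
  move=> j hj x; have := hv (inord j, x); rewrite row_blk inordK //.
  congr (0 <= _ - _); apply: eq_bigr => y _; by rewrite /blk hj.
have key : forall j, (j <= n.+1)%N -> forall x, 0 <= blk v j x.
  apply: down_ind; first by move=> x; rewrite /blk ltnn.
  move=> j hj IH; apply: lam_ip => x; have := hb j hj x; have := IH x; lra.
case=> j x; rewrite -blk_val; apply: key; exact: ltnW.
Qed.

Lemma blk_bound (g : I -> R) (j0 : 'I_n.+1) (y0 : Lam) :
  (forall a, \sum_c q0r a c * g c = (a == (j0, y0))%:R) -> forall a, g a <= 1.
Proof.
move=> hg; pose G := blk g.
have hb : forall j, (j < n.+1)%N -> forall x,
    \sum_y Mr x y * G j y = G j.+1 x + ((j == j0) && (x == y0))%:R.
  move=> j hj x; have := hg (inord j, x); rewrite row_blk inordK //.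
  have -> : \sum_y Mr x y * g (inord j, y) = \sum_y Mr x y * G j y.
    by apply: eq_bigr => y _; rewrite /G /blk hj.
  move=> h; rewrite (_ : \sum_y Mr x y * G j y = G j.+1 x + ((inord j, x) == (j0, y0))%:R); last first.
    by rewrite -h /G; ring.
  rewrite xpair_eqE.
  have -> : ((inord j : 'I_n.+1) == j0) = (j == j0).
    by apply/eqP/eqP => [<-|->]; [rewrite inordK | rewrite inord_val].
  by [].
pose s j := \sum_x G j x ^+ 2.
have key : forall j, (j <= n.+1)%N -> s j <= 1 /\ ((j0 < j)%N -> forall x, G j x = 0).
  apply: down_ind.
    have Z : forall x, G n.+1 x = 0 by move=> x; rewrite /G /blk ltnn.
    split=> //; rewrite /s big1 // => x _; by rewrite Z expr2 mulr0.
  move=> j hj [IH1 IH2].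
  have hq : s j <= \sum_x G j x * G j.+1 x + (j == j0)%:R * G j y0.
    apply: le_trans (quad_ge (G j)) _.
    under eq_bigr do rewrite hb //.
    rewrite (eq_bigr (fun x => G j x * G j.+1 x + (j == j0)%:R * (G j x * (x == y0)%:R))); last first.
      by move=> x _; rewrite -mulnb natrM; ring.
    rewrite big_split /= -mulr_sumr.
    rewrite [X in _ + _ * X](bigD1 y0) //= eqxx mulr1 [X in _ + _ * (_ + X)]big1 ?addr0 //.
    by move=> x /negbTE ->; rewrite mulr0.
  case: (ltngtP j0 j) => hjj.
  - have Z : forall x, G j.+1 x = 0 by apply: IH2; apply: ltnW.
    have hs : s j <= 0.
      move: hq; rewrite (gtn_eqF hjj) mul0r addr0 big1 // => x _; by rewrite Z mulr0.
    have Z2 : forall x, G j x = 0.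
      move=> x; have := sq_le_sum (G j) x; rewrite -/(s j) => h.
      have : G j x ^+ 2 <= 0 by apply: le_trans h hs.
      move=> h2; have h3 : G j x ^+ 2 = 0 by apply/eqP; rewrite eq_le h2 sqr_ge0.
      by move/eqP: h3; rewrite sqrf_eq0 => /eqP.
    split=> // ; lra.
  - have h2 : forall x, 2 * (G j x * G j.+1 x) <= G j x ^+ 2 + G j.+1 x ^+ 2.
      move=> x; have := sqr_ge0 (G j x - G j.+1 x); rewrite sqrrB; lra.
    have h3 : 2 * \sum_x G j x * G j.+1 x <= s j + s j.+1.
      by rewrite mulr_sumr /s -big_split /=; apply: ler_sum => x _; apply: h2.
    move: hq; rewrite (ltn_eqF hjj) mul0r addr0 => hq.
    split; first lra.
    by [].
  - have Z : forall x, G j.+1 x = 0 by apply: IH2; rewrite hjj.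
    move: hq; rewrite hjj eqxx mul1r big1; last by move=> x _; rewrite Z mulr0.
    rewrite add0r => hq.
    have h4 := sq_le_sum (G j0) y0; rewrite -/(s j0) in h4.
    split; last by [].
    rewrite hjj in h4; nra.
case=> j x; rewrite -blk_val -/G.
have [h1 _] := key j (ltnW (ltn_ord j)).
have h4 := sq_le_sum (G j) x; rewrite -/(s j) in h4.
nra.
Qed.
End Lam.

Section Cx.
Variables (R : realType) (d L : nat).
Local Notation Lam := (torus d L).
Variable E : Lam -> Lam -> R[i].
Hypothesis hherm : herm_op E.
Hypothesis hpsd : psd E.
Hypothesis hoff : offdiag_nonpos E.
Variables (beta : R) (n : nat).
Hypothesis hbeta : 0 <= beta.
Local Notation I := (@blk_idx d L n).
Local Notation e := (@eps R beta n).
Local Notation q0 := (@q0r R d L E e n).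

Lemma e_ge0 : 0 <= e.
Proof. by rewrite /eps divr_ge0. Qed.

Definition nr (z : R[i]) : R := complex.Re `|z|.

Lemma normE (z : R[i]) : `|z| = (nr z)%:C.
Proof. by rewrite /nr normc_def. Qed.

Lemma nr_ge0 z : 0 <= nr z.
Proof. by rewrite -ler0c -normE. Qed.

Lemma nr_eq0 z : nr z = 0 -> z = 0.
Proof. by move=> h; apply/eqP; rewrite -normr_eq0 normE h. Qed.

Lemma qcE h (a c : I) : Q4_entry beta n E h a c =
  (q0 a c)%:C - 'i * (Num.sqrt e * hh h a.1 a.2)%:C * (a == c)%:R.
Proof.
case: a c => j x [j' x'] /=; rewrite /Q4_entry /q0r /Mr xpair_eqE.
rewrite (E_real _ _ _ _ hherm hoff); set ee := @eps R beta n.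
case: (eqVneq (j : nat) j') => hj.
  have -> : j = j' by apply: val_inj.
  rewrite (gtn_eqF (ltnSn _)) eqxx /= mul1r mul0r subr0 rmorphD !rmorphM !rmorph_nat; ring.
have hj' : (j == j') = false by exact: negbTE hj.
rewrite hj' /= mul0r mulr0 subr0 sub0r.
by case: (j.+1 == j'); rewrite ?mul1r ?mul0r ?oppr0 ?rmorphN ?rmorph_nat.
Qed.


Lemma q0_off (a c : I) : a != c -> q0 a c <= 0.
Proof.
case: a c => j x [j' x'] /=; rewrite xpair_eqE /q0r /Mr => hne.
case: (eqVneq (j : nat) j') => hj.
  have hj2 : j = j' by apply: val_inj.
  move: hne; rewrite hj2 eqxx /= => hx.
  rewrite (negbTE hx) mul1r add0r mulr0 subr0.
  by rewrite mulr_ge0_le0 ?e_ge0 // (Er_off _ _ _ _ hoff).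
have -> : (false%:R : R) = 0 by [].
by rewrite mul0r sub0r oppr_le0 mulr_ge0 ?ler0n.
Qed.

Lemma normC_real (x : R) : `|x%:C| = `|x|%:C.
Proof. by rewrite normc_def /= [0 ^+ 2]expr2 mulr0 addr0 sqrtr_sqr. Qed.

Lemma le_norm_diag (x t : R) : x%:C <= `|x%:C - 'i * t%:C|.
Proof.
rewrite normc_def /= lecR !(mul0r, mul1r, mulr0, subr0, sub0r, add0r, addr0) oppr0 subr0.
apply: le_trans (ler_norm x) _.
by rewrite -sqrtr_sqr ler_sqrt ?addr_ge0 ?sqr_ge0 // lerDl sqr_ge0.
Qed.

Lemma kato h (u f : I -> R[i]) a :
  \sum_c Q4_entry beta n E h a c * u c = f a ->
  \sum_c q0 a c * nr (u c) <= nr (f a).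
Proof.
move=> H; rewrite -lecR [X in _ <= X](_ : _ = `|f a|); last by rewrite normE.
rewrite rmorph_sum /=.
set t := Num.sqrt e * hh h a.1 a.2.
have hs : ((q0 a a)%:C - 'i * t%:C) * u a = f a - \sum_(c | c != a) (q0 a c)%:C * u c.
  rewrite -H (bigD1 a) //= qcE eqxx mulr1.
  have -> : \sum_(c | c != a) Q4_entry beta n E h a c * u c =
            \sum_(c | c != a) (q0 a c)%:C * u c.
    by apply: eq_bigr => c hc; rewrite qcE eq_sym (negbTE hc) mulr0 subr0.
  by rewrite addrK.
rewrite (bigD1 a) //=.
have h1 : (q0 a a * nr (u a))%:C <= `|f a| + \sum_(c | c != a) `|(q0 a c)%:C * u c|.
  have -> : (q0 a a * nr (u a))%:C = (q0 a a)%:C * `|u a| by rewrite normE rmorphM.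
  apply: le_trans (_ : `|(q0 a a)%:C - 'i * t%:C| * `|u a| <= _).
    by rewrite ler_wpM2r ?normr_ge0 // le_norm_diag.
  rewrite -normrM hs; apply: le_trans (ler_normB _ _) _.
  by rewrite lerD2l ler_norm_sum.
have h2 : \sum_(c | c != a) `|(q0 a c)%:C * u c| = - \sum_(c | c != a) (q0 a c * nr (u c))%:C.
  rewrite -sumrN; apply: eq_bigr => c hc.
  have hq : q0 a c <= 0 by apply: q0_off; rewrite eq_sym.
  rewrite normrM normC_real (ler0_norm hq) normE.
  by rewrite -rmorphM -rmorphN mulNr.
by rewrite h2 lerBrDr in h1.
Qed.


Lemma sum_enum (F : I -> R[i]) : \sum_(k < #|I|) F (enum_val k) = \sum_c F c.
Proof. by symmetry; rewrite (reindex (fun k : 'I_#|I| => enum_val k)) //; apply: onW_bij; exact: enum_val_bij. Qed.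

Lemma q0_ip (v : I -> R) : (forall a, 0 <= \sum_c q0 a c * v c) -> forall a, 0 <= v a.
Proof. exact: (blk_ip _ _ _ _ hherm hpsd hoff _ e_ge0). Qed.

Lemma Q4_unit h : Q4 beta n E h \in unitmx.
Proof.
rewrite unitmxE unitfE -det_tr; apply/negP => /det0P [v vn0 hv].
pose u c := v 0 (enum_rank c).
have hu : forall a, \sum_c Q4_entry beta n E h a c * u c = 0.
  move=> a; move/matrixP: hv => /(_ 0 (enum_rank a)); rewrite !mxE => hv'.
  apply: etrans hv'.
  rewrite -sum_enum; apply: eq_bigr => k _; rewrite !mxE enum_rankK /u enum_valK.
  by rewrite mulrC.
have hk : forall a, \sum_c q0 a c * nr (u c) <= 0.
  move=> a; have := @kato h u (fun _ => 0) a (hu a); rewrite /nr normr0 /=; done.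
have hz : forall c, u c = 0.
  move=> c; apply: nr_eq0; apply/eqP; rewrite eq_le nr_ge0 andbT.
  have hq : forall a, 0 <= \sum_c q0 a c * - nr (u c).
    move=> a; rewrite (eq_bigr (fun c => - (q0 a c * nr (u c)))); last by move=> ? _; rewrite mulrN.
    by rewrite sumrN oppr_ge0.
  by have := @q0_ip _ hq c; rewrite oppr_ge0.
move/eqP: vn0; apply; apply/rowP => k; rewrite mxE.
by have := hz (enum_val k); rewrite /u enum_valK.
Qed.

Definition C4g h (c b : I) := C4 beta n E h (enum_rank c) (enum_rank b).

Lemma col_eq h (a b : I) :
  \sum_c Q4_entry beta n E h a c * C4g h c b = (a == b)%:R.
Proof.
have := mulmxV (Q4_unit h); move/matrixP => /(_ (enum_rank a) (enum_rank b)).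
rewrite !mxE (inj_eq enum_rank_inj) => <-.
rewrite -sum_enum; apply: eq_bigr => k _; rewrite /C4g /C4 !mxE enum_rankK enum_valK.
done.
Qed.



Lemma Re_sum (F : I -> R[i]) : complex.Re (\sum_c F c) = \sum_c complex.Re (F c).
Proof.
have hm : {morph (@complex.Re R) : x y / x + y >-> (x + y)%R} by move=> [? ?] [? ?].
exact: (big_morph _ hm).
Qed.

Lemma Im_sum (F : I -> R[i]) : complex.Im (\sum_c F c) = \sum_c complex.Im (F c).
Proof.
have hm : {morph (@complex.Im R) : x y / x + y >-> (x + y)%R} by move=> [? ?] [? ?].
exact: (big_morph _ hm).
Qed.

Lemma Re_mulC (r : R) (z : R[i]) : complex.Re (r%:C * z) = r * complex.Re z.
Proof. by case: z => a b /=; rewrite mul0r subr0. Qed.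

Lemma Im_mulC (r : R) (z : R[i]) : complex.Im (r%:C * z) = r * complex.Im z.
Proof. by case: z => a b /=; rewrite mul0r addr0. Qed.

Local Notation h0 := (fun (_ : nat) (_ : Lam) => (0 : R)).

Lemma Q0E (a c : I) : Q4_entry beta n E h0 a c = (q0 a c)%:C.
Proof.
have hh0 : hh h0 a.1 a.2 = 0 by rewrite /hh; case: ifP.
rewrite qcE hh0 mulr0.
have -> : (0 : R)%:C = 0 by [].
by rewrite mulr0 mul0r subr0.
Qed.

Lemma G0_eqs (a b : I) :
  \sum_c q0 a c * complex.Re (C4g h0 c b) = (a == b)%:R /\
  \sum_c q0 a c * complex.Im (C4g h0 c b) = 0.
Proof.
have := col_eq h0 a b.
under eq_bigr do rewrite Q0E.
move=> H; split.
  have := congr1 (@complex.Re R) H; rewrite Re_sum.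
  under eq_bigr do rewrite Re_mulC.
  by move=> ->; case: (a == b).
have := congr1 (@complex.Im R) H; rewrite Im_sum.
under eq_bigr do rewrite Im_mulC.
by move=> ->; case: (a == b).
Qed.

Lemma G0_real (c b : I) : C4g h0 c b = (complex.Re (C4g h0 c b))%:C.
Proof.
have him : forall c, complex.Im (C4g h0 c b) = 0.
  move=> c'; apply/eqP; rewrite eq_le; apply/andP; split.
    have hq : forall a, 0 <= \sum_c q0 a c * - complex.Im (C4g h0 c b).
      move=> a; rewrite (eq_bigr (fun c => - (q0 a c * complex.Im (C4g h0 c b)))); last by move=> ? _; rewrite mulrN.
      by rewrite sumrN (G0_eqs a b).2 oppr0.
    by have := @q0_ip _ hq c'; rewrite oppr_ge0.
  have hq : forall a, 0 <= \sum_c q0 a c * complex.Im (C4g h0 c b).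
    by move=> a; rewrite (G0_eqs a b).2.
  exact: (@q0_ip _ hq c').
by move: (him c); case: (C4g h0 c b) => x y /= ->.
Qed.

Lemma part1 h (c b : I) : nr (C4g h c b) <= complex.Re (C4g h0 c b).
Proof.
have hk : forall a, \sum_c q0 a c * nr (C4g h c b) <= (a == b)%:R.
  move=> a; have := @kato h (fun c => C4g h c b) (fun a => (a == b)%:R) a (col_eq h a b).
  suff -> : nr ((a == b)%:R) = (a == b)%:R by [].
  by rewrite /nr; case: (a == b); rewrite ?normr1 ?normr0.
have hq : forall a, 0 <= \sum_c q0 a c * (complex.Re (C4g h0 c b) - nr (C4g h c b)).
  move=> a; under eq_bigr do rewrite mulrBr.
  rewrite sumrB (G0_eqs a b).1 subr_ge0; exact: hk.
by have := @q0_ip _ hq c; rewrite subr_ge0.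
Qed.

Lemma part2 (c b : I) : complex.Re (C4g h0 c b) <= 1.
Proof.
case: b => j0 y0.
apply: (@blk_bound R d L E hherm hpsd hoff e e_ge0 n (fun c => complex.Re (C4g h0 c (j0, y0))) j0 y0) => a.
exact: (G0_eqs a (j0, y0)).1.
Qed.

End Cx.

Theorem lemma6p6 (R : realType) (d L : nat) (beta : R) (hbeta : 0 < beta)
  (E : torus d L -> torus d L -> R[i])
  (hherm : herm_op E) (hpsd : psd E) (hoff : offdiag_nonpos E) :
  (forall (ntau : nat), (0 < ntau)%N ->
     forall (h : nat -> torus d L -> R) (j j' : 'I_ntau.+1) (x x' : torus d L),
       `| C4_entry beta ntau E h j x j' x' |
         <= C4_entry beta ntau E (fun _ _ => 0) j x j' x')
  /\
  (exists M : R, forall (ntau : nat), (0 < ntau)%N ->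
     forall (j j' : 'I_ntau.+1) (x x' : torus d L),
       C4_entry beta ntau E (fun _ _ => 0) j x j' x' <= M%:C).
Proof.
have hb : 0 <= beta by apply: ltW.
split.
  move=> n _ h j j' x x'.
  change (`|C4g R d L E beta n h (j, x) (j', x')| <= C4g R d L E beta n (fun _ _ => 0) (j, x) (j', x')).
  rewrite (@G0_real R d L E hherm hpsd hoff beta n hb) normE lecR.
  exact: (@part1 R d L E hherm hpsd hoff beta n hb).
exists 1 => n _ j j' x x'.
change (C4g R d L E beta n (fun _ _ => 0) (j, x) (j', x') <= 1%:C).
rewrite (@G0_real R d L E hherm hpsd hoff beta n hb) lecR.
exact: (@part2 R d L E hherm hpsd hoff beta n hb).
Qed.
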